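(* If $r\ge\sqrt{\frac{c\ln n}{n}}$ with a constant $c\ge 36$, then w.h.p. $G(n,r)$ is not plane.
   Context: The random geometric graph $G(n,r)$ is formed by choosing $n$ points independently and uniformly at random in the unit square $[0,1]^2$; two points are joined by a straight-line edge iff their Euclidean distance is at most $r$, where $r=r(n)$ is a function of $n$. Two line segments cross if they have a common point that is interior to both. A geometric graph is plane if no two of its edges cross. ''W.h.p.'' means with probability tending to $1$ as $n\to\infty$. *)

(* Defs.v *)
From Stdlib Require Import Reals Lra.
Open Scope R_scope.

Definition point := (R * R)%type.

Definition dist (p q : point) : R :=
  sqrt ((fst p - fst q)^2 + (snd p - snd q)^2).

Definition seg_interior (p q z : point) : Prop :=
  exists t : R, 0 < t < 1 /\
    z = (fst p + t * (fst q - fst p), snd p + t * (snd q - snd p)).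

Definition segs_cross (p q p' q' : point) : Prop :=
  exists z : point, seg_interior p q z /\ seg_interior p' q' z.

(** A configuration of n points: X i for i < n (other values irrelevant). *)
Definition config := nat -> point.

Definition rg_edge (n : nat) (r : R) (X : config) (i j : nat) : Prop :=
  (i < n)%nat /\ (j < n)%nat /\ i <> j /\ dist (X i) (X j) <= r.

Definition rg_plane (n : nat) (r : R) (X : config) : Prop :=
  forall i j k l : nat,
    rg_edge n r X i j -> rg_edge n r X k l ->
    ~ ((i = k /\ j = l) \/ (i = l /\ j = k)) ->
    ~ segs_cross (X i) (X j) (X k) (X l).

Definition in_unit_square (n : nat) (X : config) : Prop :=
  forall i : nat, (i < n)%nat ->
    0 <= fst (X i) <= 1 /\ 0 <= snd (X i) <= 1.

(** Lebesgue (outer) measure on R^(2n) = (R^2)^n, via countable covers by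
    closed boxes.  A box is given by corners lo, hi : config. *)
Definition in_box (n : nat) (lo hi : config) (X : config) : Prop :=
  forall i : nat, (i < n)%nat ->
    fst (lo i) <= fst (X i) <= fst (hi i) /\
    snd (lo i) <= snd (X i) <= snd (hi i).

Fixpoint box_vol (n : nat) (lo hi : config) : R :=
  match n with
  | O => 1
  | S m => box_vol m lo hi *
           ((fst (hi m) - fst (lo m)) * (snd (hi m) - snd (lo m)))
  end.

Definition box_ok (n : nat) (lo hi : config) : Prop :=
  forall i : nat, (i < n)%nat -> fst (lo i) <= fst (hi i) /\ snd (lo i) <= snd (hi i).

Definition outer_measure_lt (n : nat) (E : config -> Prop) (eps : R) : Prop :=
  exists (lo hi : nat -> config) (l : R),
    (forall k, box_ok n (lo k) (hi k)) /\
    (forall X, E X -> exists k, in_box n (lo k) (hi k) X) /\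
    infinite_sum (fun k => box_vol n (lo k) (hi k)) l /\ l < eps.

(** Event that G(n,r) (points X_0..X_{n-1} i.i.d. uniform in [0,1]^2) is plane;
    its probability is the Lebesgue measure of this subset of [0,1]^(2n). *)
Definition plane_event (n : nat) (r : R) : config -> Prop :=
  fun X => in_unit_square n X /\ rg_plane n r X.

(* Main.v *)
Require Import Defs.
From Stdlib Require Import Reals Lra Lia List Classical.
Import ListNotations.
Open Scope R_scope.

Fixpoint sum_list (L : list R) : R :=
  match L with nil => 0 | a :: L' => a + sum_list L' end.

Lemma sum_list_app : forall L1 L2, sum_list (L1 ++ L2) = sum_list L1 + sum_list L2.
Proof. induction L1; intros; simpl; [lra| rewrite IHL1; lra]. Qed.

Lemma sum_f_zero : forall n, sum_f_R0 (fun _ => 0) n = 0.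
Proof. induction n; simpl; [lra| rewrite IHn; lra]. Qed.

Lemma sum_f_list : forall L n, (n >= length L)%nat ->
  sum_f_R0 (fun k => nth k L 0) n = sum_list L.
Proof.
  induction L as [|a L IH]; intros n Hn; simpl.
  - etransitivity; [|apply (sum_f_zero n)]. apply sum_eq. intros i _. destruct i; reflexivity.
  - simpl in Hn. rewrite decomp_sum by lia. simpl. rewrite IH by lia. reflexivity.
Qed.

Lemma infinite_sum_list : forall (f : nat -> R) L, (forall k, f k = nth k L 0) ->
  infinite_sum f (sum_list L).
Proof.
  intros f L Hf eps He. exists (length L). intros n Hn.
  unfold Rdist.
  replace (sum_f_R0 f n) with (sum_f_R0 (fun k => nth k L 0) n).
  rewrite sum_f_list by lia. rewrite Rminus_diag, Rabs_R0. exact He.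
  apply sum_eq. intros; rewrite Hf; reflexivity.
Qed.

Definition pbox := (point * point)%type.
Definition pin (b : pbox) (x : point) : Prop :=
  fst (fst b) <= fst x <= fst (snd b) /\ snd (fst b) <= snd x <= snd (snd b).
Definition pvol (b : pbox) : R :=
  (fst (snd b) - fst (fst b)) * (snd (snd b) - snd (fst b)).
Definition pok (b : pbox) : Prop := fst (fst b) <= fst (snd b) /\ snd (fst b) <= snd (snd b).

Definition cbox := (config * config)%type.
Definition upd (m : nat) (b : pbox) (B : cbox) : cbox :=
  (fun i => if Nat.eq_dec i m then fst b else fst B i,
   fun i => if Nat.eq_dec i m then snd b else snd B i).

Definition zbox : cbox := (fun _ => (0,0), fun _ => (0,0)).

Fixpoint prod_boxes (Bs : list pbox) (n : nat) : list cbox :=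
  match n with
  | O => [zbox]
  | S m => flat_map (fun b => map (upd m b) (prod_boxes Bs m)) Bs
  end.

Definition cvol n (B : cbox) := box_vol n (fst B) (snd B).

Lemma box_vol_ext : forall n lo hi lo' hi',
  (forall i, (i < n)%nat -> lo i = lo' i /\ hi i = hi' i) ->
  box_vol n lo hi = box_vol n lo' hi'.
Proof.
  induction n; intros lo hi lo' hi' H; simpl; auto.
  rewrite (IHn lo hi lo' hi') by (intros; apply H; lia).
  destruct (H n) as [E1 E2]; [lia|]. rewrite E1, E2; reflexivity.
Qed.

Lemma cvol_upd : forall m b B, cvol (S m) (upd m b B) = cvol m B * pvol b.
Proof.
  intros. unfold cvol, upd. simpl.
  destruct (Nat.eq_dec m m); [|congruence].
  f_equal. apply box_vol_ext. intros i Hi.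
  destruct (Nat.eq_dec i m); [lia|]. auto.
Qed.

Lemma sum_map_upd : forall m b L,
  sum_list (map (cvol (S m)) (map (upd m b) L)) = sum_list (map (cvol m) L) * pvol b.
Proof.
  induction L; simpl; [lra|]. rewrite cvol_upd, IHL. lra.
Qed.

Lemma sum_flat : forall m L Bs,
  sum_list (map (cvol (S m)) (flat_map (fun b => map (upd m b) L) Bs))
  = sum_list (map (cvol m) L) * sum_list (map pvol Bs).
Proof.
  intros m L Bs. induction Bs as [|b Bs IH]; simpl; [lra|].
  rewrite map_app, sum_list_app, sum_map_upd, IH. lra.
Qed.

Lemma prod_boxes_vol : forall Bs n,
  sum_list (map (cvol n) (prod_boxes Bs n)) = (sum_list (map pvol Bs)) ^ n.
Proof.
  intros Bs n. induction n; simpl.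
  - unfold cvol; simpl; lra.
  - rewrite sum_flat, IHn. lra.
Qed.

Lemma prod_boxes_ok : forall Bs n, (forall b, In b Bs -> pok b) ->
  forall B, In B (prod_boxes Bs n) -> box_ok n (fst B) (snd B).
Proof.
  intros Bs n HB. induction n; simpl; intros B HI.
  - intros i Hi; lia.
  - apply in_flat_map in HI. destruct HI as [b [Hb HI]].
    apply in_map_iff in HI. destruct HI as [B' [<- HB']].
    intros i Hi. unfold upd; simpl.
    destruct (Nat.eq_dec i n). apply HB; auto.
    apply (IHn B' HB'). lia.
Qed.

Lemma prod_boxes_cover : forall Bs n X,
  (forall i, (i < n)%nat -> exists b, In b Bs /\ pin b (X i)) ->
  exists B, In B (prod_boxes Bs n) /\ in_box n (fst B) (snd B) X.
Proof.
  intros Bs n X. induction n; intros H.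
  - exists zbox. simpl. split; auto. intros i Hi; lia.
  - destruct IHn as [B' [HB' Hin]]. intros; apply H; lia.
    destruct (H n) as [b [Hb Hpb]]. lia.
    exists (upd n b B'). split.
    + simpl. apply in_flat_map. exists b. split; auto. apply in_map; auto.
    + intros i Hi. unfold upd; simpl. destruct (Nat.eq_dec i n).
      subst. exact Hpb. apply Hin. lia.
Qed.
Definition compl_boxes (x0 x1 y0 y1 : R) : list pbox :=
  [((0,0),(1,y0)); ((0,y1),(1,1)); ((0,y0),(x0,y1)); ((x1,y0),(1,y1))].

Lemma compl_ok : forall x0 x1 y0 y1, 0 <= x0 <= x1 -> x1 <= 1 -> 0 <= y0 <= y1 -> y1 <= 1 ->
  forall b, In b (compl_boxes x0 x1 y0 y1) -> pok b.
Proof.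
  intros. simpl in H3. unfold pok.
  repeat (destruct H3 as [<-|H3]; [simpl; lra|]). destruct H3.
Qed.

Lemma compl_vol : forall x0 x1 y0 y1,
  sum_list (map pvol (compl_boxes x0 x1 y0 y1)) = 1 - (x1 - x0) * (y1 - y0).
Proof. intros. unfold pvol; simpl. ring. Qed.

Lemma compl_cover : forall x0 x1 y0 y1 (x : point),
  0 <= fst x <= 1 -> 0 <= snd x <= 1 ->
  ~ (x0 <= fst x <= x1 /\ y0 <= snd x <= y1) ->
  exists b, In b (compl_boxes x0 x1 y0 y1) /\ pin b x.
Proof.
  intros x0 x1 y0 y1 x H1 H2 H3. unfold pin; simpl.
  destruct (Rle_dec (snd x) y0).
  { exists ((0,0),(1,y0)). simpl; split; [auto|lra]. }
  destruct (Rle_dec y1 (snd x)).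
  { exists ((0,y1),(1,1)). simpl; split; [auto|lra]. }
  destruct (Rle_dec (fst x) x0).
  { exists ((0,y0),(x0,y1)). simpl; split; [auto 6|lra]. }
  destruct (Rle_dec x1 (fst x)).
  { exists ((x1,y0),(1,y1)). simpl; split; [auto 6|lra]. }
  exfalso; apply H3; lra.
Qed.

Lemma cross_lemma : forall h a b c d a' b' c' d', 0 < h ->
  0 <= a <= h -> 3*h <= b <= 4*h ->
  6*h <= c <= 7*h -> 3*h <= d <= 4*h ->
  3*h <= a' <= 4*h -> 0 <= b' <= h ->
  3*h <= c' <= 4*h -> 6*h <= d' <= 7*h ->
  segs_cross (a,b) (c,d) (a',b') (c',d').
Proof.
  intros h a b c d a' b' c' d' Hh Ha Hb Hc Hd Ha' Hb' Hc' Hd'.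
  set (dx := c - a). set (dy := d - b). set (ex := c' - a'). set (ey := d' - b').
  set (wx := a' - a). set (wy := b' - b).
  set (D := dx * ey - dy * ex).
  assert (HD : 0 < D).
  { unfold D, dx, dy, ex, ey. nra. }
  set (t := (wx * ey - wy * ex) / D).
  set (u := (dy * wx - dx * wy) / D).
  exists (a + t * (c - a), b + t * (d - b)). split.
  - exists t. split; [|reflexivity].
    unfold t. split.
    + apply Rdiv_lt_0_compat; auto. unfold wx, wy, ex, ey. nra.
    + apply (Rmult_lt_reg_r D); auto. unfold Rdiv. rewrite Rmult_assoc, Rinv_l by lra.
      unfold D, wx, wy, ex, ey, dx, dy. nra.
  - exists u. split.
    + unfold u. split.
      * apply Rdiv_lt_0_compat; auto. unfold wx, wy, dx, dy. nra.
      * apply (Rmult_lt_reg_r D); auto. unfold Rdiv. rewrite Rmult_assoc, Rinv_l by lra.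
        unfold D, wx, wy, ex, ey, dx, dy. nra.
    + simpl. unfold t, u. fold dx dy. f_equal.
      * fold ex. unfold D, wx, wy, ex, ey, dx, dy in *. field. lra.
      * fold ey. unfold D, wx, wy, ex, ey, dx, dy in *. field. lra.
Qed.

Lemma dist_lemma : forall h r (p q : point), 0 < h -> 0 <= r -> 98 * (h*h) <= r * r ->
  0 <= fst p <= 7*h -> 0 <= snd p <= 7*h -> 0 <= fst q <= 7*h -> 0 <= snd q <= 7*h ->
  Defs.dist p q <= r.
Proof.
  intros. unfold Defs.dist. rewrite <- (sqrt_pow2 r) by auto.
  apply sqrt_le_1_alt. simpl. nra.
Qed.

Definition inA (x0 x1 y0 y1 : R) (p : point) : Prop :=
  x0 <= fst p <= x1 /\ y0 <= snd p <= y1.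

Lemma cover_empty : forall n X x0 x1 y0 y1,
  0 <= x0 <= x1 -> x1 <= 1 -> 0 <= y0 <= y1 -> y1 <= 1 ->
  in_unit_square n X -> (forall i, (i < n)%nat -> ~ inA x0 x1 y0 y1 (X i)) ->
  exists B, In B (prod_boxes (compl_boxes x0 x1 y0 y1) n) /\ in_box n (fst B) (snd B) X.
Proof.
  intros. apply prod_boxes_cover. intros i Hi.
  destruct (H3 i Hi). apply compl_cover; auto. apply H4; auto.
Qed.

Lemma plane_four : forall n r h X, 0 < h -> 0 <= r -> 98 * (h*h) <= r * r ->
  plane_event n r X ->
  (forall i, (i < n)%nat -> ~ inA 0 h (3*h) (4*h) (X i)) \/
  (forall i, (i < n)%nat -> ~ inA (6*h) (7*h) (3*h) (4*h) (X i)) \/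
  (forall i, (i < n)%nat -> ~ inA (3*h) (4*h) 0 h (X i)) \/
  (forall i, (i < n)%nat -> ~ inA (3*h) (4*h) (6*h) (7*h) (X i)).
Proof.
  intros n r h X Hh Hr Hhr [Hsq Hpl].
  apply NNPP. intro Hn.
  apply not_or_and in Hn. destruct Hn as [H1 Hn].
  apply not_or_and in Hn. destruct Hn as [H2 Hn].
  apply not_or_and in Hn. destruct Hn as [H3 H4].
  apply not_all_ex_not in H1. destruct H1 as [i H1].
  apply not_all_ex_not in H2. destruct H2 as [j H2].
  apply not_all_ex_not in H3. destruct H3 as [k H3].
  apply not_all_ex_not in H4. destruct H4 as [l H4].
  apply imply_to_and in H1. apply imply_to_and in H2.
  apply imply_to_and in H3. apply imply_to_and in H4.
  destruct H1 as [Hi Pi]. destruct H2 as [Hj Pj].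
  destruct H3 as [Hk Pk]. destruct H4 as [Hl Pl].
  apply NNPP in Pi. apply NNPP in Pj. apply NNPP in Pk. apply NNPP in Pl.
  unfold inA in *.
  destruct (X i) as [a b] eqn:Ei. destruct (X j) as [c d] eqn:Ej.
  destruct (X k) as [a' b'] eqn:Ek. destruct (X l) as [c' d'] eqn:El.
  simpl in *.
  apply (Hpl i j k l).
  - repeat split; auto.
    + intro E; subst; rewrite Ei in Ej; injection Ej; intros; lra.
    + rewrite Ei, Ej. apply (dist_lemma h); simpl; auto; lra.
  - repeat split; auto.
    + intro E; subst; rewrite Ek in El; injection El; intros; lra.
    + rewrite Ek, El. apply (dist_lemma h); simpl; auto; lra.
  - intros [[E1 E2]|[E1 E2]]; subst.
    + rewrite Ei in Ek; injection Ek; intros; lra.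
    + rewrite Ei in El; injection El; intros; lra.
  - rewrite Ei, Ej, Ek, El. apply (cross_lemma h); lra.
Qed.

Lemma cvol_zbox : forall n, (n >= 1)%nat -> cvol n zbox = 0.
Proof. intros [|n] H; [lia|]. unfold cvol; simpl. ring. Qed.

Lemma zbox_ok : forall n, box_ok n (fst zbox) (snd zbox).
Proof. intros n i _. simpl. lra. Qed.

Lemma plane_cover : forall n r h eps, (n >= 1)%nat -> 0 < h -> 7*h <= 1 -> 0 <= r ->
  98 * (h*h) <= r * r -> 4 * (1 - h*h)^n < eps ->
  outer_measure_lt n (plane_event n r) eps.
Proof.
  intros n r h eps Hn Hh H7 Hr Hhr Heps.
  set (P1 := prod_boxes (compl_boxes 0 h (3*h) (4*h)) n).
  set (P2 := prod_boxes (compl_boxes (6*h) (7*h) (3*h) (4*h)) n).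
  set (P3 := prod_boxes (compl_boxes (3*h) (4*h) 0 h) n).
  set (P4 := prod_boxes (compl_boxes (3*h) (4*h) (6*h) (7*h)) n).
  set (Lt := P1 ++ P2 ++ P3 ++ P4).
  exists (fun k => fst (nth k Lt zbox)), (fun k => snd (nth k Lt zbox)),
    (sum_list (map (cvol n) Lt)).
  assert (Hok : forall x0 x1 y0 y1, 0 <= x0 <= x1 -> x1 <= 1 -> 0 <= y0 <= y1 -> y1 <= 1 ->
     forall B, In B (prod_boxes (compl_boxes x0 x1 y0 y1) n) -> box_ok n (fst B) (snd B)).
  { intros. eapply prod_boxes_ok; [|eassumption]. apply compl_ok; auto. }
  split; [|split; [|split]].
  - intro k. destruct (Nat.lt_ge_cases k (length Lt)) as [Hk|Hk].
    + pose proof (nth_In Lt zbox Hk) as HI. unfold Lt in HI.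
      repeat rewrite in_app_iff in HI.
      destruct HI as [HI|[HI|[HI|HI]]]; (eapply Hok; [| | | |exact HI]); lra.
    + rewrite nth_overflow by lia. apply zbox_ok.
  - intros X HX.
    assert (Hcov : exists B, In B Lt /\ in_box n (fst B) (snd B) X).
    { destruct (plane_four n r h X Hh Hr Hhr HX) as [H|[H|[H|H]]];
      [ destruct (cover_empty n X 0 h (3*h) (4*h)) as [B [HB1 HB2]]
      | destruct (cover_empty n X (6*h) (7*h) (3*h) (4*h)) as [B [HB1 HB2]]
      | destruct (cover_empty n X (3*h) (4*h) 0 h) as [B [HB1 HB2]]
      | destruct (cover_empty n X (3*h) (4*h) (6*h) (7*h)) as [B [HB1 HB2]] ];
      try lra; try (apply HX); try exact H;
      exists B; split; auto; unfold Lt; repeat rewrite in_app_iff; tauto. }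
    destruct Hcov as [B [HB Hin]].
    destruct (In_nth Lt B zbox HB) as [k [_ Hk]]. exists k. rewrite Hk. exact Hin.
  - apply infinite_sum_list. intro k.
    transitivity (nth k (map (cvol n) Lt) (cvol n zbox)).
    rewrite map_nth; reflexivity. rewrite cvol_zbox by auto; reflexivity.
  - unfold Lt. rewrite !map_app, !sum_list_app. unfold P1, P2, P3, P4.
    rewrite !prod_boxes_vol, !compl_vol.
    replace ((h - 0) * (4 * h - 3 * h)) with (h*h) by ring.
    replace ((7 * h - 6 * h) * (4 * h - 3 * h)) with (h*h) by ring.
    replace ((4 * h - 3 * h) * (h - 0)) with (h*h) by ring.
    replace ((4 * h - 3 * h) * (7 * h - 6 * h)) with (h*h) by ring.
    lra.
Qed.

Lemma exp_pow_n : forall x n, exp x ^ n = exp (INR n * x).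
Proof.
  intros x n. induction n.
  - simpl. rewrite Rmult_0_l, exp_0. reflexivity.
  - rewrite S_INR. simpl. rewrite IHn, <- exp_plus. f_equal. ring.
Qed.

Lemma pow_bound : forall x n, 0 <= x <= 1 -> (1 - x)^n <= exp (- (INR n * x)).
Proof.
  intros x n Hx. replace (- (INR n * x)) with (INR n * (-x)) by ring.
  rewrite <- exp_pow_n. apply pow_incr. split; [lra|].
  pose proof (exp_ineq1_le (-x)). lra.
Qed.

Theorem theorem3 (c : R) (r : nat -> R) :
  c >= 36 ->
  (exists N0 : nat, forall n : nat, (n >= N0)%nat ->
      r n >= sqrt (c * ln (INR n) / INR n)) ->
  forall eps : R, eps > 0 ->
    exists N : nat, forall n : nat, (n >= N)%nat ->
      outer_measure_lt n (plane_event n (r n)) eps.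
Proof.
  intros Hc [N0 HN0] eps Heps.
  set (K := Rabs (ln (4/eps)) + 1).
  assert (HK : ln (4/eps) < K) by (unfold K; pose proof (Rle_abs (ln (4/eps))); lra).
  assert (HK0 : 0 < K) by (unfold K; pose proof (Rabs_pos (ln (4/eps))); lra).
  destruct (INR_unbounded (exp (3*K))) as [N1 HN1].
  destruct (INR_unbounded (100*K)) as [N2 HN2].
  exists (Nat.max N0 (Nat.max N1 (Nat.max N2 2))). intros n Hn.
  assert (Hn2 : (n >= 2)%nat) by lia.
  assert (HnN1 : INR n >= INR N1) by (apply Rle_ge, le_INR; lia).
  assert (HnN2 : INR n >= INR N2) by (apply Rle_ge, le_INR; lia).
  assert (Hn2R : 2 <= INR n) by (replace 2 with (INR 2) by (simpl; ring); apply le_INR; lia).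
  assert (Hln : 0 < ln (INR n)).
  { rewrite <- ln_1. apply ln_increasing; lra. }
  assert (HlnK : 3*K < ln (INR n)).
  { rewrite <- (ln_exp (3*K)). apply ln_increasing. apply exp_pos. lra. }
  set (y := c * ln (INR n) / INR n).
  assert (Hy : 0 < y) by (unfold y; apply Rdiv_lt_0_compat; nra).
  pose proof (HN0 n ltac:(lia)) as Hr. fold y in Hr.
  assert (Hsq : 0 < sqrt y) by (apply sqrt_lt_R0; auto).
  assert (Hr2 : y <= r n * r n).
  { rewrite <- (sqrt_sqrt y) by lra. nra. }
  assert (Hny : INR n * y = c * ln (INR n)) by (unfold y; field; lra).
  set (h := Rmin (r n) 1 / 10).
  assert (Hh : 0 < h /\ h <= r n / 10 /\ h <= 1/10 /\ INR n * (h*h) > K).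
  { unfold h. destruct (Rle_dec (r n) 1).
    - rewrite Rmin_left by auto. repeat split; try lra.
      assert (INR n * (r n * r n) >= c * ln (INR n)) by nra.
      nra.
    - rewrite Rmin_right by lra. repeat split; try lra. }
  destruct Hh as [Hh0 [Hh1 [Hh2 Hh3]]].
  apply (plane_cover n (r n) h eps); try lia; try lra; try nra.
  eapply Rle_lt_trans. apply Rmult_le_compat_l; [lra|]. apply pow_bound; nra.
  assert (exp (- (INR n * (h * h))) < exp (- ln (4/eps))).
  { apply exp_increasing. lra. }
  rewrite (exp_Ropp (ln (4/eps))), exp_ln in H by (apply Rdiv_lt_0_compat; lra).
  replace (/ (4/eps)) with (eps/4) in H by (field; lra). lra.
Qed.
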